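(* Let $h,k$ be integers with $hk(h+k)\neq0$. Then for every integer $n$ with $n(n+h)(n-k)\neq 0$, $$d(n)\,d(n+h)\,d(n-k)\ \le\ d(h)\,d(k)\,d(h+k)\,d\big(n(n+h)(n-k)\big).$$
   Context: For a nonzero integer $m$, $d(m)$ denotes the number of positive divisors of $m$ (so $d(m)=d(|m|)$). *)

(* Defs.v *)
From mathcomp Require Import all_boot all_order all_algebra.
Set Implicit Arguments. Unset Strict Implicit. Unset Printing Implicit Defensive.
Import Order.TTheory GRing.Theory Num.Theory.

(* d(m) = number of positive divisors of |m|, for an integer m.
   (divisors 0 = [::], but d is only applied to nonzero integers.) *)
Definition ndiv (m : int) : nat := size (divisors `|m|%N).

(* Main.v *)
Require Import Defs.
From mathcomp Require Import all_boot all_order all_algebra.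
From mathcomp Require Import zify ring.
Import Order.TTheory GRing.Theory Num.Theory.
Local Open Scope ring_scope.

Lemma per_ineq (x y z : nat) : (x.+1 * y.+1 * z.+1 <= (minn x y).+1 * (minn x z).+1 * (minn y z).+1 * (x+y+z).+1)%N.
Proof.
case: (leqP x y) => h1; case: (leqP x z) => h2; case: (leqP y z) => h3.
all: rewrite ?(minn_idPl (ltnW _)) ?(minn_idPr (ltnW _)) ?(minn_idPl _) ?(minn_idPr _) //; nia.
Qed.

Lemma size_add_divisors f divs :
  size (PrimeDecompAux.add_divisors f divs) = ((f.2).+1 * size divs)%N.
Proof.
case: f => p e /=; elim: e => [|e IH] /=; first by rewrite mul1n.
by rewrite size_merge size_cat size_map IH [in RHS]mulSn addnC.
Qed.

Lemma size_divisors_prod n :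
  size (divisors n) = (\prod_(p <- primes n) (logn p n).+1)%N.
Proof.
rewrite /divisors prime_decompE.
elim: (primes n) => [|p s IH]; first by rewrite big_nil.
rewrite map_cons [foldr _ _ _]/= (size_add_divisors (p, logn p n)) big_cons IH.
by [].
Qed.

Lemma size_divisors_iota n N : (0 < n)%N -> (n < N)%N ->
  size (divisors n) = (\prod_(p <- iota 0 N) (logn p n).+1)%N.
Proof.
move=> n0 nN; rewrite size_divisors_prod.
have pe : perm_eq (primes n) [seq p <- iota 0 N | p \in primes n].
  apply: uniq_perm; first exact: primes_uniq.
    by rewrite filter_uniq // iota_uniq.
  move=> p; rewrite mem_filter mem_iota add0n.
  case pn: (p \in primes n) => //=; symmetry.
  move: pn; rewrite mem_primes => /and3P[_ _ pd].
  exact: leq_ltn_trans (dvdn_leq n0 pd) nN.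
rewrite (perm_big _ pe) big_filter big_mkcond /=.
apply: eq_bigr => p _; case pn: (p \in primes n) => //.
by rewrite -logn_gt0 in pn; move: pn; case: (logn p n).
Qed.

Lemma logn_min p (a b c : int) : a != 0 -> b != 0 -> c != 0 ->
  (exists u v : int, c = u * a + v * b) ->
  (minn (logn p `|a|) (logn p `|b|) <= logn p `|c|)%N.
Proof.
move=> a0 b0 c0 [u [v ec]].
case pp: (prime p); last by rewrite /logn pp.
have pos x : x != 0 -> (0 < `|x|)%N by rewrite absz_gt0.
rewrite -pfactor_dvdn ?pos //.
have da : (Posz (p ^ minn (logn p `|a|) (logn p `|b|)) %| a)%Z.
  rewrite dvdzE /= (dvdn_trans _ (pfactor_dvdnn p `|a|)) //.
  by rewrite dvdn_exp2l // geq_minl.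
have db : (Posz (p ^ minn (logn p `|a|) (logn p `|b|)) %| b)%Z.
  rewrite dvdzE /= (dvdn_trans _ (pfactor_dvdnn p `|b|)) //.
  by rewrite dvdn_exp2l // geq_minr.
have : (Posz (p ^ minn (logn p `|a|) (logn p `|b|)) %| c)%Z.
  by rewrite ec rpredD // dvdz_mull.
by rewrite dvdzE.
Qed.

Ltac dv := first [ exact: dvdnn | apply: dvdn_mulr; dv | apply: dvdn_mull; dv ].

Lemma bnd (a b c d e f : nat) : (0<a -> 0<b -> 0<c -> 0<d -> 0<e -> 0<f ->
  let P := a*b*c*(d*e*f) in
  (a < P.+1) /\ (b < P.+1) /\ (c < P.+1) /\ (d < P.+1) /\ (e < P.+1) /\ (f < P.+1) /\ (0 < a*b*c) /\ (a*b*c < P.+1))%N.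
Proof.
move=> Ha Hb Hc Hd He Hf; rewrite /=.
have P0 : (0 < a*b*c*(d*e*f))%N by rewrite !muln_gt0 Ha Hb Hc Hd He Hf.
repeat split; rewrite ?ltnS; try apply: dvdn_leq => //; try dv.
by rewrite !muln_gt0 Ha Hb Hc.
Qed.

Theorem lemma2p5 (h k : int) (hhk : h * k * (h + k) != 0) (n : int)
  (hn : n * (n + h) * (n - k) != 0) :
  (ndiv n * ndiv (n + h) * ndiv (n - k)
   <= ndiv h * ndiv k * ndiv (h + k) * ndiv (n * (n + h) * (n - k)))%N.
Proof.
move: hhk hn; rewrite !mulf_eq0 !negb_or => /andP[/andP[h0 k0] s0] /andP[/andP[a0 b0] c0].
have pos x : x != 0 -> (0 < `|x|)%N by rewrite absz_gt0.
set N := (absz (n * (n + h) * (n - k)) * (absz h * absz k * absz (h + k))).+1.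
have pa := pos _ a0; have pb := pos _ b0; have pc := pos _ c0.
have ph := pos _ h0; have pk := pos _ k0; have ps := pos _ s0.
have eP : absz (n * (n + h) * (n - k)) = (absz n * absz (n + h)%R * absz (n - k)%R)%N by rewrite !abszM.
have [q1 [q2 [q3 [q4 [q5 [q6 [q7 q8]]]]]]] := bnd _ _ _ _ _ _ pa pb pc ph pk ps.
rewrite /ndiv !(@size_divisors_iota _ N) /N ?eP //.
rewrite -!big_split /=.
apply: leq_prod => p _.
rewrite !lognM ?muln_gt0 ?pa ?pb ?pc //.
apply: leq_trans (per_ineq (logn p `|n|) (logn p `|(n + h)%R|) (logn p `|(n - k)%R|)) _.
rewrite -!mulnA; repeat apply: leq_mul => //.
- apply: logn_min => //; exists (-1), 1; ring.
- apply: logn_min => //; exists 1, (-1); ring.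
- apply: logn_min => //; exists 1, (-1); ring.
Qed.
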